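(* Let $J,J^r:\mathbb{R}^n\to\mathbb{R}^k$ be continuously differentiable and let $\epsilon\in[0,\infty)^k$ satisfy $\sup_{u\in\mathbb{R}^n}\|\nabla J_i(u)-\nabla J_i^r(u)\|_2\le\epsilon_i$ for all $i\in\{1,\dots,k\}$. Let $P_c$ and $P_c^r$ denote the Pareto critical sets of $J$ and $J^r$, respectively, and define $$P_1^r:=\Big\{u\in\mathbb{R}^n:\min_{\alpha\in\Delta_k}\|DJ^r(u)^\top\alpha\|_2^2\le\|\epsilon\|_\infty^2\Big\},\qquad P_2^r:=\Big\{u\in\mathbb{R}^n:\min_{\alpha\in\Delta_k}\big(\|DJ^r(u)^\top\alpha\|_2^2-(\alpha^\top\epsilon)^2\big)\le 0\Big\}.$$ Then $P_c\subseteq P_2^r\subseteq P_1^r$ and $P_c^r\subseteq P_2^r\subseteq P_1^r$.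
   Context: $\Delta_k:=\{\alpha\in[0,\infty)^k:\sum_{i=1}^k\alpha_i=1\}$. For differentiable $J:\mathbb{R}^n\to\mathbb{R}^k$, $DJ(u)\in\mathbb{R}^{k\times n}$ is the Jacobian, so $DJ(u)^\top\alpha=\sum_i\alpha_i\nabla J_i(u)$. The Pareto critical set of $J$ is the set of all $u\in\mathbb{R}^n$ for which there exists $\alpha\in\Delta_k$ with $DJ(u)^\top\alpha=0$. *)

(* Defs.v *)
From Stdlib Require Import Reals.
Open Scope R_scope.

(* Vectors of R^m are modelled as functions nat -> R, of which only the
   coordinates 0..m-1 are used. *)

Fixpoint rsum (m : nat) (f : nat -> R) : R :=
  match m with
  | O => 0
  | S p => rsum p f + f p
  end.

Definition dot (m : nat) (u v : nat -> R) : R := rsum m (fun j => u j * v j).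

Definition norm2 (m : nat) (v : nat -> R) : R := sqrt (dot m v v).

Definition vadd (u v : nat -> R) : nat -> R := fun j => u j + v j.
Definition vsub (u v : nat -> R) : nat -> R := fun j => u j - v j.

Fixpoint linf (m : nat) (e : nat -> R) : R :=
  match m with
  | O => 0
  | S p => Rmax (linf p e) (Rabs (e p))
  end.

Definition has_gradient (n : nat) (f : (nat -> R) -> R) (u g : nat -> R) : Prop :=
  forall eps, 0 < eps -> exists delta, 0 < delta /\
    forall h, norm2 n h < delta ->
      Rabs (f (vadd u h) - f u - dot n g h) <= eps * norm2 n h.

Definition C1_with_gradient (n : nat) (f : (nat -> R) -> R)
  (G : (nat -> R) -> (nat -> R)) : Prop :=
  (forall u, has_gradient n f u (G u)) /\
  (forall u eps, 0 < eps -> exists delta, 0 < delta /\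
     forall v, norm2 n (vsub v u) < delta -> norm2 n (vsub (G v) (G u)) < eps).

Definition in_simplex (k : nat) (a : nat -> R) : Prop :=
  (forall i, (i < k)%nat -> 0 <= a i) /\ rsum k a = 1.

(* DJ(u)^T a = sum_i a_i grad J_i(u), where G i u = grad J_i(u) *)
Definition jacT (k : nat) (G : nat -> (nat -> R) -> (nat -> R)) (u a : nat -> R)
  : nat -> R := fun j => rsum k (fun i => a i * G i u j).

Definition pareto_critical (n k : nat) (G : nat -> (nat -> R) -> (nat -> R))
  (u : nat -> R) : Prop :=
  exists a, in_simplex k a /\ forall j, (j < n)%nat -> jacT k G u a j = 0.

Definition P1 (n k : nat) (Gr : nat -> (nat -> R) -> (nat -> R)) (e : nat -> R)
  (u : nat -> R) : Prop :=
  exists a, in_simplex k a /\ (norm2 n (jacT k Gr u a))^2 <= (linf k e)^2.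

Definition P2 (n k : nat) (Gr : nat -> (nat -> R) -> (nat -> R)) (e : nat -> R)
  (u : nat -> R) : Prop :=
  exists a, in_simplex k a /\ (norm2 n (jacT k Gr u a))^2 - (dot k a e)^2 <= 0.

(* Main.v *)
Require Import Defs.
From Stdlib Require Import Reals Lra Lia Psatz.
Open Scope R_scope.

Lemma rsum_ext m f g : (forall j, (j < m)%nat -> f j = g j) -> rsum m f = rsum m g.
Proof. induction m; simpl; intros H; auto. rewrite IHm by (intros; apply H; lia). rewrite H by lia. auto. Qed.

Lemma rsum_le m f g : (forall j, (j < m)%nat -> f j <= g j) -> rsum m f <= rsum m g.
Proof. induction m; simpl; intros H; [lra|]. assert (f m <= g m) by (apply H; lia).
 assert (rsum m f <= rsum m g) by (apply IHm; intros; apply H; lia). lra. Qed.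

Lemma rsum_plus m f g : rsum m (fun j => f j + g j) = rsum m f + rsum m g.
Proof. induction m; simpl; [lra|]. rewrite IHm. lra. Qed.

Lemma rsum_scal m c f : rsum m (fun j => c * f j) = c * rsum m f.
Proof. induction m; simpl; [lra|]. rewrite IHm. lra. Qed.

Lemma rsum_nonneg m f : (forall j, (j < m)%nat -> 0 <= f j) -> 0 <= rsum m f.
Proof. intros H. replace 0 with (rsum m (fun _ => 0)). apply rsum_le; auto.
 clear H; induction m; simpl; auto; rewrite IHm; lra. Qed.

Lemma dot_nonneg n x : 0 <= dot n x x.
Proof. apply rsum_nonneg. intros. nra. Qed.

Lemma cs_step Sx A B a b : Sx*Sx <= A*B -> 0 <= A -> 0 <= B ->
  (Sx + a*b)*(Sx+a*b) <= (A + a*a)*(B+b*b).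
Proof.
 intros H HA HB.
 assert (H1 : (A*(b*b) + B*(a*a))*(A*(b*b) + B*(a*a)) >= 4*(A*B)*((a*b)*(a*b))) by (assert (0 <= (A*(b*b) - B*(a*a))*(A*(b*b) - B*(a*a))) by apply Rle_0_sqr; nra).
 assert (H2 : (Sx*Sx)*((a*b)*(a*b)) <= (A*B)*((a*b)*(a*b))) by (apply Rmult_le_compat_r; nra).
 assert (H3 : 0 <= A*(b*b) + B*(a*a)) by nra.
 assert (2*Sx*(a*b) <= A*(b*b) + B*(a*a)).
 { destruct (Rle_dec (2*Sx*(a*b)) (A*(b*b) + B*(a*a))); auto. nra. }
 nra.
Qed.

Lemma cauchy_schwarz n x y : dot n x y * dot n x y <= dot n x x * dot n y y.
Proof.
 unfold dot. induction n; simpl; [lra|].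
 apply cs_step; auto; [apply (dot_nonneg n x) | apply (dot_nonneg n y)].
Qed.

Lemma norm2_ext n x y : (forall j, (j < n)%nat -> x j = y j) -> norm2 n x = norm2 n y.
Proof. intros H. unfold norm2, dot. f_equal. apply rsum_ext. intros. rewrite H; auto. Qed.

Lemma norm2_nonneg n x : 0 <= norm2 n x.
Proof. apply sqrt_pos. Qed.

Lemma norm2_sq n x : norm2 n x * norm2 n x = dot n x x.
Proof. unfold norm2. apply sqrt_sqrt, dot_nonneg. Qed.

Lemma norm2_triangle n x y : norm2 n (fun j => x j + y j) <= norm2 n x + norm2 n y.
Proof.
 assert (Hx := norm2_nonneg n x). assert (Hy := norm2_nonneg n y).
 assert (Hxy := norm2_nonneg n (fun j => x j + y j)).
 assert (E : dot n (fun j => x j + y j) (fun j => x j + y j) = dot n x x + 2 * dot n x y + dot n y y).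
 { unfold dot. rewrite <- !rsum_scal, <- !rsum_plus. apply rsum_ext. intros. ring. }
 assert (CS := cauchy_schwarz n x y).
 rewrite <- (norm2_sq n x), <- (norm2_sq n y) in CS.
 assert (dot n x y <= norm2 n x * norm2 n y).
 { destruct (Rle_dec (dot n x y) (norm2 n x * norm2 n y)); auto.
   assert (0 <= norm2 n x * norm2 n y) by (apply Rmult_le_pos; auto).
   assert (norm2 n x * norm2 n y * (norm2 n x * norm2 n y) < dot n x y * dot n x y) by (apply Rmult_le_0_lt_compat; lra). nra. }
 assert (Hs := norm2_sq n (fun j => x j + y j)). rewrite E, <- (norm2_sq n x), <- (norm2_sq n y) in Hs.
 destruct (Rle_dec (norm2 n (fun j => x j + y j)) (norm2 n x + norm2 n y)); auto. nra.
Qed.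

Lemma norm2_zero n : norm2 n (fun _ => 0) = 0.
Proof. unfold norm2, dot. replace (rsum n (fun _ => 0*0)) with 0. apply sqrt_0.
 induction n; simpl; auto; rewrite <- IHn; lra. Qed.

Lemma norm2_scal n c x : norm2 n (fun j => c * x j) = Rabs c * norm2 n x.
Proof. unfold norm2. replace (dot n (fun j => c * x j) (fun j => c * x j)) with ((c*c) * dot n x x).
 rewrite sqrt_mult by (nra || apply dot_nonneg). f_equal. apply sqrt_Rsqr_abs.
 unfold dot. rewrite <- rsum_scal. apply rsum_ext. intros; ring. Qed.

Lemma norm_rsum n k (f : nat -> nat -> R) :
  norm2 n (fun j => rsum k (fun i => f i j)) <= rsum k (fun i => norm2 n (f i)).
Proof.
 induction k; simpl. rewrite norm2_zero. lra.
 eapply Rle_trans. apply (norm2_triangle n (fun j => rsum k (fun i => f i j)) (f k)). lra.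
Qed.

Lemma linf_ge k e i : (i < k)%nat -> Rabs (e i) <= linf k e.
Proof. induction k; intros H; [lia|]. simpl. destruct (Nat.eq_dec i k).
 subst; apply Rmax_r. eapply Rle_trans; [apply IHk; lia| apply Rmax_l]. Qed.

Theorem mainTheorem2 (n k : nat)
  (J Jr : nat -> (nat -> R) -> R)
  (G Gr : nat -> (nat -> R) -> (nat -> R))
  (e : nat -> R)
  (hJ : forall i, (i < k)%nat -> C1_with_gradient n (J i) (G i))
  (hJr : forall i, (i < k)%nat -> C1_with_gradient n (Jr i) (Gr i))
  (he : forall i, (i < k)%nat -> 0 <= e i)
  (hsup : forall i, (i < k)%nat -> forall u, norm2 n (vsub (G i u) (Gr i u)) <= e i) :
  forall u : nat -> R,
    (pareto_critical n k G u -> P2 n k Gr e u) /\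
    (P2 n k Gr e u -> P1 n k Gr e u) /\
    (pareto_critical n k Gr u -> P2 n k Gr e u).
Proof.
  intros u. split; [|split].
  - intros [a [[Ha1 Ha2] Hc]]. exists a. split; [split; auto|].
    assert (Hn : norm2 n (jacT k Gr u a) <= dot k a e).
    { rewrite (norm2_ext n _ (fun j => rsum k (fun i => a i * (Gr i u j - G i u j)))).
      2:{ intros j Hj. rewrite <- (Rminus_0_r (jacT k Gr u a j)), <- (Hc j Hj).
          unfold jacT. replace (fun i => a i * (Gr i u j - G i u j)) with
            (fun i => a i * Gr i u j + (-1) * (a i * G i u j)).
          rewrite rsum_plus, rsum_scal. ring.
          apply FunctionalExtensionality.functional_extensionality; intros; ring. }
      eapply Rle_trans. apply (norm_rsum n k (fun i j => a i * (Gr i u j - G i u j))).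
      unfold dot. apply rsum_le. intros i Hi. rewrite norm2_scal, Rabs_pos_eq by auto.
      apply Rmult_le_compat_l; auto. eapply Rle_trans; [|apply (hsup i Hi u)].
      right. unfold vsub.
      replace (fun j => Gr i u j - G i u j) with (fun j => (-1) * (G i u j - Gr i u j)).
      rewrite norm2_scal. replace (Rabs (-1)) with 1 by (rewrite Rabs_left; lra). ring.
      apply FunctionalExtensionality.functional_extensionality; intros; ring. }
    assert (H0 := norm2_nonneg n (jacT k Gr u a)). simpl. nra.
  - intros [a [[Ha1 Ha2] Hc]]. exists a. split; [split; auto|].
    assert (D0 : 0 <= dot k a e) by (apply rsum_nonneg; intros; apply Rmult_le_pos; auto).
    assert (D1 : dot k a e <= linf k e).
    { unfold dot. eapply Rle_trans. apply (rsum_le k _ (fun i => linf k e * a i)).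
      intros i Hi. rewrite Rmult_comm. apply Rmult_le_compat_r; auto.
      eapply Rle_trans; [apply Rle_abs| apply linf_ge; auto].
      rewrite rsum_scal, Ha2. lra. }
    simpl in *. nra.
  - intros [a [[Ha1 Ha2] Hc]]. exists a. split; [split; auto|].
    rewrite (norm2_ext n _ (fun _ => 0)) by auto. rewrite norm2_zero. simpl. nra.
Qed.
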